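(* Let $\mathcal{D}\subset\mathbb{R}^N$ be open, bounded, connected, and assume the boundary point $y_0\in\partial\mathcal{D}$ is walk-regular. Then for every continuous $F:\partial\mathcal{D}\to\mathbb{R}$, the functions $u^\epsilon(x)=\mathbb{E}[F\circ X^{\epsilon,x}]$ satisfy: for every $\eta>0$ there exist $\hat\delta>0$ and $\hat\epsilon\in(0,1)$ such that $|u^\epsilon(x_0)-F(y_0)|\le\eta$ for all $\epsilon\in(0,\hat\epsilon)$ and all $x_0\in B_{\hat\delta}(y_0)\cap\mathcal{D}$.
   Context: Probability space: $\Omega_1=B_1(0)\subset\mathbb{R}^N$ with Borel $\sigma$-algebra and normalised Lebesgue measure; $(\Omega,\mathcal{F},\mathbb{P})$ is the countable product $\Omega=(\Omega_1)^{\mathbb{N}}$, $\omega=\{w_i\}_{i\ge1}$. The $\epsilon$-ball walk started at $x\in\mathcal{D}$: $X_0^{\epsilon,x}\equiv x$, $X_n^{\epsilon,x}=X_{n-1}^{\epsilon,x}+\big(\epsilon\wedge\operatorname{dist}(X_{n-1}^{\epsilon,x},\partial\mathcal{D})\big)w_n$ for $n\ge1$; it converges $\mathbb{P}$-a.s. to a random variable $X^{\epsilon,x}:\Omega\to\partial\mathcal{D}$. A point $y_0\in\partial\mathcal{D}$ is walk-regular if for every $\eta,\delta>0$ there exist $\hat\delta\in(0,\delta)$ and $\hat\epsilon\in(0,1)$ such that $\mathbb{P}(X^{\epsilon,x_0}\in B_\delta(y_0))\ge1-\eta$ for all $\epsilon\in(0,\hat\epsilon)$ and all $x_0\in B_{\hat\delta}(y_0)\cap\mathcal{D}$.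 *)

(* Defs.v *)
From HB Require Import structures.
From mathcomp Require Import all_boot all_order all_algebra.
From mathcomp Require Import all_classical all_reals all_analysis.
Set Implicit Arguments. Unset Strict Implicit. Unset Printing Implicit Defensive.
Import Order.TTheory GRing.Theory Num.Theory.
Import numFieldNormedType.Exports.
Local Open Scope classical_set_scope.
Local Open Scope ring_scope.

Section Defs.
Variables (R : realType) (N : nat).

(* Euclidean norm on R^N (the library norm on matrices is the max norm). *)
Definition enorm (x : 'rV[R]_N) : R := Num.sqrt (\sum_(i < N) x ord0 i ^+ 2).

Definition eball (c : 'rV[R]_N) (r : R) : set 'rV[R]_N :=
  [set x | enorm (x - c) < r].

Definition bdry (D : set 'rV[R]_N) : set 'rV[R]_N := closure D `\` interior D.

Definition edist (x : 'rV[R]_N) (A : set 'rV[R]_N) : R :=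
  inf [set enorm (x - y) | y in A].

Definition borelN : set (set 'rV[R]_N) := <<s open >>.

(* The epsilon-ball walk driven by w : nat -> 'rV_N
   (w n plays the role of w_{n+1}). *)
Fixpoint ball_walk (D : set 'rV[R]_N) (eps : R) (x : 'rV[R]_N)
    (w : nat -> 'rV[R]_N) (n : nat) : 'rV[R]_N :=
  match n with
  | 0 => x
  | n'.+1 => let y := ball_walk D eps x w n' in
             y + (Num.min eps (edist y (bdry D))) *: w n'
  end.

End Defs.

(* N-dimensional Lebesgue integral of a nonnegative function, as an iterated
   one-dimensional Lebesgue integral (Tonelli). *)
Fixpoint leb_iint {R : realType} (n : nat) : ('rV[R]_n -> \bar R) -> \bar R :=
  match n with
  | 0 => fun f => f 0
  | n'.+1 => fun f =>
      (\int[@lebesgue_measure R]_(t in [set: R])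
         leb_iint (fun v : 'rV[R]_n' =>
           f (\row_(i < n'.+1) (if unlift ord0 i is Some j then v ord0 j else t))))%E
  end.

Definition volN {R : realType} (N : nat) (A : set 'rV[R]_N) : \bar R :=
  leb_iint (fun v => (\1_A v)%:E).

Definition unif_ball {R : realType} (N : nat) (A : set 'rV[R]_N) : R :=
  fine (volN (A `&` eball 0 1)) / fine (volN (eball (0 : 'rV[R]_N) 1)).

(* w is an i.i.d. sequence of random vectors uniformly distributed on B_1(0):
   joint law of (w_0,...,w_{n-1}) is the product of uniform laws. *)
Definition iid_unif_ball {R : realType} (N : nat) {d : measure_display}
    {T : measurableType d} (P : probability T R) (w : nat -> T -> 'rV[R]_N) :=
  (forall n A, borelN A -> measurable (w n @^-1` A)) /\
  (forall (n : nat) (A : nat -> set 'rV[R]_N), (forall i, borelN (A i)) ->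
     P (\bigcap_(i in [set i | (i < n)%N]) (w i @^-1` A i))
     = (\prod_(i < n) unif_ball (A i))%:E).

(* X eps x is (a version of) the a.s. limit X^{eps,x} of the eps-ball walk
   started at x: a boundary-valued random variable. *)
Definition walk_limit {R : realType} (N : nat) {d : measure_display}
    {T : measurableType d} (P : probability T R) (D : set 'rV[R]_N)
    (w : nat -> T -> 'rV[R]_N) (X : R -> 'rV[R]_N -> T -> 'rV[R]_N) :=
  forall (eps : R) (x : 'rV[R]_N), 0 < eps -> D x ->
    (forall om, bdry D (X eps x om)) /\
    (forall A, borelN A -> measurable (X eps x @^-1` A)) /\
    {ae P, forall om, ball_walk D eps x (fun n => w n om) n @[n --> \oo]
                      --> X eps x om}.

Definition walk_regular {R : realType} (N : nat) {d : measure_display}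
    {T : measurableType d} (P : probability T R) (D : set 'rV[R]_N)
    (X : R -> 'rV[R]_N -> T -> 'rV[R]_N) (y0 : 'rV[R]_N) :=
  forall eta delta : R, 0 < eta -> 0 < delta ->
    exists dh : R, (0 < dh < delta) /\ exists eh : R, (0 < eh < 1) /\
      forall (eps : R) (x0 : 'rV[R]_N), 0 < eps < eh ->
        (eball y0 dh `&` D) x0 ->
        ((1 - eta)%:E <= P (X eps x0 @^-1` eball y0 delta))%E.

Definition u_eps {R : realType} (N : nat) {d : measure_display}
    {T : measurableType d} (P : probability T R)
    (X : R -> 'rV[R]_N -> T -> 'rV[R]_N) (F : 'rV[R]_N -> R)
    (eps : R) (x : 'rV[R]_N) : \bar R :=
  (\int[P]_(om in [set: T]) (F (X eps x om))%:E)%E.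

(* Main.v *)
Require Import Defs.
From HB Require Import structures.
From mathcomp Require Import all_boot all_order all_algebra.
From mathcomp Require Import all_classical all_reals all_analysis.
From mathcomp Require Import measurable_realfun.
From mathcomp Require Import ring lra.
Import Order.TTheory GRing.Theory Num.Theory.
Import numFieldNormedType.Exports.
Local Open Scope classical_set_scope.
Local Open Scope ring_scope.
Set Implicit Arguments. Unset Strict Implicit.
Lemma enorm_cont (R : realType) (N : nat) (c : 'rV[R]_N) :
  continuous (fun x : 'rV[R]_N => enorm (x - c)).
Proof.
move=> x; rewrite /enorm.
apply: (continuous_comp (f := fun x : 'rV[R]_N => \sum_(i < N) (x - c) ord0 i ^+ 2)); last first.
  exact: sqrt_continuous.
apply: (@continuous_big R 'I_N +%R 0 xpredT add_continuous _ (index_enum _)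
   (fun i (y : 'rV[R]_N) => (y - c) ord0 i ^+ 2)) => i _ y.
rewrite /continuous_at.
have hc : {for y, continuous (fun y0 : 'rV[R]_N => y0 - c)}.
  apply: continuousB; [exact: cvg_id | exact: cst_continuous].
have h : {for y, continuous (fun y0 : 'rV[R]_N => (y0 - c) ord0 i)}.
  exact: (continuous_comp (f := fun y0 : 'rV[R]_N => y0 - c) (g := fun M : 'rV[R]_N => M ord0 i) hc (@coord_continuous R 1 N ord0 i (y - c))).
under eq_cvg do rewrite expr2.
exact: (cvgM h h).
Qed.
Lemma eball_open (R : realType) (N : nat) (c : 'rV[R]_N) r : open (eball c r).
Proof.
have -> : eball c r = (fun x => enorm (x - c)) @^-1` `]-oo, r[.
  by apply/seteqP; split => x /=; rewrite /eball /= in_itv /=.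
apply: open_comp; first by move=> x _; exact: enorm_cont.
exact: itv_open_ends_open.
Qed.

Lemma meas_comp (R : realType) (N : nat) (d : measure_display) (T : measurableType d)
  (A : set 'rV[R]_N) (F : 'rV[R]_N -> R) (Y : T -> 'rV[R]_N) :
  {within A, continuous F} -> (forall om, A (Y om)) ->
  (forall V, open V -> measurable (Y @^-1` V)) ->
  measurable_fun setT (fun om => F (Y om)).
Proof.
move=> cF YA mY.
apply: (measurability _ (RGenOInfty.measurableE R)) => _ [_ [x ->] <-].
have oU : open (`]x, +oo[%classic : set R) by exact: itv_open_ends_open.
have : open (F @^-1` `]x, +oo[%classic : set (subspace A)) by move/continuousP: cF; apply.
case/open_subspaceP => V oV VA.
have -> : setT `&` (fun om => F (Y om)) @^-1` `]x, +oo[%classic = Y @^-1` V.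
  apply/seteqP; split => om /=.
    move=> [_ h]; have : (F @^-1` `]x, +oo[%classic `&` A) (Y om) by split.
    by rewrite -VA => -[].
  move=> h; have : (V `&` A) (Y om) by split.
  by rewrite VA => -[].
exact: mY.
Qed.

Lemma bdry_F_bounded (R : realType) (N : nat) (D : set 'rV[R]_N) (F : 'rV[R]_N -> R) :
  bounded_set D -> {within bdry D, continuous F} ->
  exists M, 0 < M /\ forall y, bdry D y -> `|F y| <= M.
Proof.
move=> Dbd cF.
have [M M0 HM] := ex_strict_bound_gt0 Dbd.
pose K := (fun x : 'rV[R]_N => `|x|) @^-1` [set r : R | r <= M].
have cK : closed K.
  apply: preimage_closed; last exact: closed_le.
  by move=> x _; exact: norm_continuous.
have bK : bdry D `<=` K.
  move=> x [xD _]; have : closure K x.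
    by apply: (closureS _ xD) => z /HM /ltW.
  by rewrite -(proj1 (closure_id K) cK).
have cB : closed (bdry D).
  apply: closedI; first exact: closed_closure.
  by rewrite closedC; exact: open_interior.
have bB : bounded_set (bdry D).
  exists M; split; first exact: num_real.
  move=> M' MM' y /bK /= yK; exact: le_trans yK (ltW MM').
have cpt : compact (bdry D) by exact: bounded_closed_compact.
have cI : compact (F @` bdry D) by exact: continuous_compact.
have bI : bounded_set (F @` bdry D) := compact_bounded cI.
have [M2 M20 HM2] := ex_strict_bound_gt0 bI.
exists M2; split => // y By.
by apply: ltW; apply: HM2; exists y.
Qed.

Lemma mx_le_enorm (R : realType) (N : nat) (v : 'rV[R]_N) : `|v| <= enorm v.
Proof.
rewrite [leLHS]/Num.norm /= mx_normrE; apply: bigmax_le => [|[i j] _].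
  exact: sqrtr_ge0.
rewrite /enorm [i]ord1 /= -sqrtr_sqr; apply: ler_wsqrtr.
rewrite (bigD1 j) //= lerDl; apply: sumr_ge0 => k _; exact: sqr_ge0.
Qed.

Lemma cont_at (R : realType) (N : nat) (A : set 'rV[R]_N) (F : 'rV[R]_N -> R) y0 e :
  {within A, continuous F} -> A y0 -> 0 < e ->
  exists2 r, 0 < r & forall y, A y -> enorm (y - y0) < r -> `|F y - F y0| <= e.
Proof.
move=> cF Ay0 e0.
have := (subspace_continuousP A F).1 cF y0 Ay0.
move/cvgrPdist_le => /(_ e e0); rewrite near_withinE.
case/nbhs_ballP => r r0 Hr; exists r => // y Ay hy.
rewrite distrC; apply: (Hr y) => //.
rewrite mx_norm_ball /ball_ /= distrC; exact: (le_lt_trans (@mx_le_enorm _ _ (y - y0)) hy).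
Qed.

Unset Implicit Arguments. Set Strict Implicit.

Theorem lemma2p13 (R : realType) (N : nat) (d : measure_display)
    (T : measurableType d) (P : probability T R)
    (w : nat -> T -> 'rV[R]_N) (D : set 'rV[R]_N)
    (X : R -> 'rV[R]_N -> T -> 'rV[R]_N) (y0 : 'rV[R]_N) :
  iid_unif_ball P w ->
  walk_limit P D w X ->
  open D -> bounded_set D -> connected D ->
  bdry D y0 ->
  walk_regular P D X y0 ->
  forall F : 'rV[R]_N -> R, {within bdry D, continuous F} ->
  forall eta : R, 0 < eta ->
    exists dh : R, 0 < dh /\ exists eh : R, (0 < eh < 1) /\
      forall (eps : R) (x0 : 'rV[R]_N), 0 < eps < eh ->
        (eball y0 dh `&` D) x0 ->
        (`| u_eps P X F eps x0 - (F y0)%:E | <= eta%:E)%E.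
Proof.
move=> Hw HX oD bD cD By0 Hreg F cF eta eta0.
have [M [M0 HM]] := bdry_F_bounded bD cF.
have eta20 : 0 < eta / 2 by rewrite divr_gt0.
have [delta delta0 Hdel] := cont_at cF By0 eta20.
pose eta' := eta / (4 * M).
have eta'0 : 0 < eta' by rewrite divr_gt0 // mulr_gt0.
have [dh [/andP[dh0 _] [eh [eh01 Heh]]]] := Hreg eta' delta eta'0 delta0.
exists dh; split => //; exists eh; split => // eps x0 /andP[eps0 epseh] Hx0.
have Dx0 : D x0 := Hx0.2.
have [Xb [Xm _]] := HX eps x0 eps0 Dx0.
have PE := Heh eps x0 (introT andP (conj eps0 epseh)) Hx0.
rewrite /u_eps.
set Y := X eps x0.
have mY : forall V, open V -> measurable (Y @^-1` V).
  by move=> V oV; apply: Xm; apply: sub_sigma_algebra.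
have mf : measurable_fun setT (fun om => F (Y om)) := meas_comp cF Xb mY.
set E := Y @^-1` eball y0 delta.
have mE : measurable E := mY _ (@eball_open _ _ _ _).
set c := F y0.
have fint : P.-integrable setT (EFin \o (fun om => F (Y om))).
  apply: measurable_bounded_integrable => //.
    by apply: (le_lt_trans (probability_le1 P measurableT)); rewrite ltry.
  exists M; split; first exact: num_real.
  move=> M' MM' om _ /=; exact: le_trans (HM _ (Xb om)) (ltW MM').
have cint : P.-integrable setT (EFin \o (fun=> c)).
  apply: measurable_bounded_integrable => //.
    by apply: (le_lt_trans (probability_le1 P measurableT)); rewrite ltry.
  exists `|c|; split; first exact: num_real.
  by move=> M' MM' om _ /=; exact: ltW.
have ic : (\int[P]_(om in setT) (c%:E) = c%:E)%E.
  by rewrite integral_cst //= (probability_setT P) mule1.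
rewrite -{1}ic -(integralB_EFin _ fint cint) //.
have mfc : measurable_fun setT (EFin \o (fun om => F (Y om) - c)).
  by apply/measurable_EFinP; apply: measurable_funB.
apply: (le_trans (le_abse_integral _ _ mfc)) => //.
apply: (le_trans (y := (\int[P]_(om in setT) ((eta / 2)%:E + (2 * M)%:E * (\1_(~` E) om)%:E))%E)).
  apply: ge0_le_integral => //.
  - have : measurable_fun setT (EFin \o (fun om => `|F (Y om) - c|)).
      by apply/measurable_EFinP; apply: measurableT_comp => //; apply: measurable_funB.
    by [].
  - apply: emeasurable_funD => //.
    apply: emeasurable_funM => //.
    by apply/measurable_EFinP; apply: measurable_indic; apply: measurableC.
  - move=> om _ /=.
    rewrite -EFinM -EFinD lee_fin indicE.
    case: (boolP (om \in ~` E)) => hm /=.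
      have := HM _ (Xb om); have := HM _ By0; rewrite -/c => h1 h2.
      apply: le_trans (ler_normB _ _) _; lra.
    have Eom : E om by apply: contrapT => nE; move/negP: hm; apply; rewrite inE.
    have := Hdel (Y om) (Xb om) Eom; rewrite -/c => h; lra.
have mI : measurable_fun setT (fun om => ((2 * M)%:E * (\1_(~` E) om)%:E)%E).
  apply: emeasurable_funM => //.
  by apply/measurable_EFinP; apply: measurable_indic; apply: measurableC.
rewrite ge0_integralD //; [
  | by move=> om _; rewrite lee_fin ltW
  | by move=> om _; rewrite -EFinM lee_fin mulr_ge0 // ?indic_ge0 // mulr_ge0 // ltW].
rewrite integral_cst //= (probability_setT P) mule1.
rewrite ge0_integralZl //; [
  | by apply/measurable_EFinP; apply: measurable_indic; apply: measurableC
  | by rewrite lee_fin mulr_ge0 // ltW].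
rewrite integral_indic ?setIT //; last exact: measurableC.
have fE : (P E \is a fin_num)%E by rewrite fin_num_measure.
rewrite [X in (_ + _ * X <= _)%E](_ : _ = (1 - fine (P E))%:E); last first.
  by apply: eq_trans (probability_setC P mE) _; rewrite -{1}(fineK fE).
rewrite -(fineK fE) lee_fin in PE.
rewrite -EFinM -EFinD lee_fin.
have h1 : 2 * M * eta' = eta / 2.
  by rewrite /eta'; field; exact: lt0r_neq0.
have h2 : 2 * M * (1 - fine (P E)) <= 2 * M * eta'.
  by apply: ler_wpM2l; [rewrite mulr_ge0 // ltW | lra].
lra.
Qed.
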